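(* In the setting of the context, let $l\in\{0,1,\dots,N\}$. If $i\in J_m$ with $m+1\le l$, then $t_i^{l+1}\ne t_{i-1}^{l+1}$. Consequently, for every $u\in T_{l+1}$, the number of pairs $(i,s)$ with $i\in\{1,\dots,n\}$, $i\in J_m$ for some $m$ with $m+1\le l$, $s\in\{i-1,i\}$, and $t_s^{l+1}=u$ (hence $t_s^l=\pi_l(u)$) is at most two.
   Context: Fix $S>0$, $q\in(0,1)$, $d(s,t)=|s-t|^q$ on $[0,S]$, and $r\ge4$. For $n\ge0$ let $T_n=\{kr^{-n/q}S:k=0,1,2,\dots\}\cap[0,S]$ and $\pi_n(t)=\max\{s\in T_n:s\le t\}$. Let $0\le t_0<t_1<\dots<t_n\le S$ and for $m\ge0$, $J_m=\{i\in\{1,\dots,n\}:r^{-m-1}S^q<d(t_{i-1},t_i)\le r^{-m}S^q\}$. Let $N$ be an integer with $J_m=\emptyset$ for $m> N$; define $t_i^{N+1}=\pi_{N+1}(t_i)$ and recursively $t_i^l=\pi_l(t_i^{l+1})$ for $l=N,\dots,0$. *)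

(* Defs.v *)
From Stdlib Require Import Reals Lra Lia List.
Open Scope R_scope.

(* d(s,t) = |s-t|^q, with the convention 0^q = 0 (Rpower 0 q would be 1). *)
Definition dist (q s t : R) : R :=
  if Req_EM_T (Rabs (s - t)) 0 then 0 else Rpower (Rabs (s - t)) q.

Definition mesh (Sv q r : R) (k : nat) : R := Rpower r (- INR k / q) * Sv.

Definition inT (Sv q r : R) (k : nat) (x : R) : Prop :=
  (exists j : nat, x = INR j * mesh Sv q r k) /\ 0 <= x <= Sv.

(* pi_k(t) = max { s in T_k : s <= t }.  For t in [0,S] this maximum equals
   floor(t / mesh) * mesh  (Int_part is the floor function). *)
Definition pi (Sv q r : R) (k : nat) (t : R) : R :=
  IZR (Int_part (t / mesh Sv q r k)) * mesh Sv q r k.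

(* Downward recursion: chain_aux N j x = x^{N+1-j}, where
   x^{N+1} = pi_{N+1}(x) and x^l = pi_l(x^{l+1}). *)
Fixpoint chain_aux (Sv q r : R) (N : nat) (j : nat) (x : R) : R :=
  match j with
  | O => pi Sv q r (N + 1)%nat x
  | Datatypes.S j' => pi Sv q r (N + 1 - j)%nat (chain_aux Sv q r N j' x)
  end.

Definition tchain (Sv q r : R) (N l : nat) (x : R) : R :=
  chain_aux Sv q r N (N + 1 - l)%nat x.

Definition inJ (Sv q r : R) (t : nat -> R) (n m i : nat) : Prop :=
  (1 <= i <= n)%nat /\
  Rpower r (- INR m - 1) * Rpower Sv q < dist q (t (i - 1)%nat) (t i) /\
  dist q (t (i - 1)%nat) (t i) <= Rpower r (- INR m) * Rpower Sv q.

(* Main.v *)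
Require Import Defs.
From Stdlib Require Import Reals Lra Lia List.
Open Scope R_scope.

Lemma Rpower_pos x y : 0 < Rpower x y.
Proof. unfold Rpower; apply exp_pos. Qed.

Lemma mesh_pos Sv q r k : 0 < Sv -> 0 < mesh Sv q r k.
Proof. intros; unfold mesh. pose proof (Rpower_pos r (- INR k / q)). nra. Qed.

Lemma mesh_step Sv q r k : 0 < Sv -> 0 < q -> q < 1 -> 4 <= r ->
  4 * mesh Sv q r (S k) <= mesh Sv q r k.
Proof.
  intros HS Hq0 Hq1 Hr. unfold mesh.
  assert (E : - INR (S k) / q = - INR k / q + (- (1/q))).
  { rewrite S_INR. field. lra. }
  rewrite E, Rpower_plus.
  assert (H1 : Rpower r (- (1/q)) * Rpower r (1/q) = 1).
  { rewrite <- Rpower_plus. replace (- (1/q) + 1/q) with 0 by ring. apply Rpower_O. lra. }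
  assert (H2 : r <= Rpower r (1/q)).
  { rewrite <- (Rpower_1 r) at 1 by lra. apply Rle_Rpower. lra.
    apply (Rmult_le_reg_l q); try lra. field_simplify; lra. }
  pose proof (Rpower_pos r (- (1/q))). pose proof (Rpower_pos r (- INR k / q)).
  assert (Rpower r (- (1/q)) * 4 <= 1).
  { pose proof (Rmult_le_compat_l (Rpower r (- (1/q))) 4 (Rpower r (1/q)) ltac:(lra) ltac:(lra)). lra. }
  assert (0 < Rpower r (- INR k / q) * Sv) by nra.
  pose proof (Rmult_le_compat_l (Rpower r (- INR k / q) * Sv) _ _ (Rlt_le _ _ H4) H3).
  lra.
Qed.

Lemma mesh_mono Sv q r k j : 0 < Sv -> 0 < q -> q < 1 -> 4 <= r ->
  (k <= j)%nat -> mesh Sv q r j <= mesh Sv q r k.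
Proof.
  intros HS Hq0 Hq1 Hr H. induction H. lra.
  pose proof (mesh_step Sv q r m HS Hq0 Hq1 Hr). pose proof (mesh_pos Sv q r (S m) HS). lra.
Qed.

Lemma pi_bound Sv q r k x : 0 < Sv ->
  x - mesh Sv q r k < pi Sv q r k x <= x.
Proof.
  intros HS. unfold pi. pose proof (mesh_pos Sv q r k HS) as Hm.
  destruct (base_Int_part (x / mesh Sv q r k)) as [A B].
  set (z := IZR (Int_part (x / mesh Sv q r k))) in *.
  assert (E : x = (x / mesh Sv q r k) * mesh Sv q r k) by (field; lra).
  split; rewrite E at 1 ; nra.
Qed.

Lemma chain_bound Sv q r N j x : 0 < Sv -> 0 < q -> q < 1 -> 4 <= r ->
  (j <= N)%nat ->
  x - 4/3 * mesh Sv q r (N + 1 - j) < chain_aux Sv q r N j x <= x.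
Proof.
  intros HS Hq0 Hq1 Hr. induction j as [|j IH]; intros Hj; simpl.
  - pose proof (pi_bound Sv q r (N+1) x HS). rewrite Nat.sub_0_r.
    pose proof (mesh_pos Sv q r (N+1) HS). lra.
  - destruct (IH ltac:(lia)) as [A B].
    pose proof (pi_bound Sv q r (N + 1 - S j) (chain_aux Sv q r N j x) HS).
    replace (N + 1 - j)%nat with (S (N + 1 - S j)) in A by lia.
    pose proof (mesh_step Sv q r (N + 1 - S j) HS Hq0 Hq1 Hr). lra.
Qed.

Lemma tchain_bound Sv q r N l x : 0 < Sv -> 0 < q -> q < 1 -> 4 <= r ->
  (l <= N)%nat ->
  x - mesh Sv q r l / 3 < tchain Sv q r N (l+1) x <= x.
Proof.
  intros HS Hq0 Hq1 Hr Hl. unfold tchain.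
  destruct (chain_bound Sv q r N (N + 1 - (l + 1)) x HS Hq0 Hq1 Hr ltac:(lia)).
  replace (N + 1 - (N + 1 - (l + 1)))%nat with (S l) in * by lia.
  pose proof (mesh_step Sv q r l HS Hq0 Hq1 Hr). lra.
Qed.

Lemma J_gap Sv q r t n m i l : 0 < Sv -> 0 < q -> q < 1 -> 4 <= r ->
  t (i-1)%nat < t i -> inJ Sv q r t n m i -> (m + 1 <= l)%nat ->
  mesh Sv q r l < t i - t (i-1)%nat.
Proof.
  intros HS Hq0 Hq1 Hr Hlt [_ [A _]] Hml.
  pose proof (mesh_mono Sv q r (m+1) l HS Hq0 Hq1 Hr Hml).
  cut (mesh Sv q r (m+1) < t i - t (i-1)%nat). lra.
  unfold Defs.dist in A.
  assert (HR : Rabs (t (i - 1)%nat - t i) = t i - t (i-1)%nat) by (rewrite Rabs_left1; lra).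
  destruct (Req_EM_T _ 0) in A.
  { pose proof (Rpower_pos r (- INR m - 1)). pose proof (Rpower_pos Sv q). nra. }
  destruct (Rlt_le_dec (mesh Sv q r (m+1)) (t i - t (i-1)%nat)) as [h|h]. exact h.
  exfalso.
  rewrite HR in A.
  assert (Rpower (t i - t (i - 1)%nat) q <= Rpower (mesh Sv q r (m+1)) q).
  { apply Rle_Rpower_l; lra. }
  unfold mesh in H0. rewrite <- Rpower_mult_distr in H0 by (auto using Rpower_pos).
  rewrite Rpower_mult in H0.
  replace (- INR (m + 1) / q * q) with (- INR m - 1) in H0.
  lra. rewrite plus_INR. simpl. field. lra.
Qed.

Lemma t_mono (t : nat -> R) n :
  (forall i : nat, (1 <= i <= n)%nat -> t (i - 1)%nat < t i) ->
  forall a b, (a <= b)%nat -> (b <= n)%nat -> t a <= t b.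
Proof.
  intros Hinc a b Hab. induction Hab; intros Hb. lra.
  specialize (IHHab ltac:(lia)). specialize (Hinc (S m) ltac:(lia)).
  replace (S m - 1)%nat with m in Hinc by lia. lra.
Qed.

Theorem lemma2 (Sv q r : R) (n N : nat) (t : nat -> R)
  (HS : 0 < Sv) (Hq0 : 0 < q) (Hq1 : q < 1) (Hr : 4 <= r)
  (Ht0 : 0 <= t 0%nat) (Htn : t n <= Sv)
  (Hinc : forall i : nat, (1 <= i <= n)%nat -> t (i - 1)%nat < t i)
  (HN : forall m i : nat, (N < m)%nat -> ~ inJ Sv q r t n m i)
  (l : nat) (Hl : (l <= N)%nat) :
  (forall i m : nat, inJ Sv q r t n m i -> (m + 1 <= l)%nat ->
     tchain Sv q r N (l + 1) (t i) <> tchain Sv q r N (l + 1) (t (i - 1)%nat))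
  /\
  (forall u : R, inT Sv q r (l + 1) u ->
     forall L : list (nat * nat), NoDup L ->
       (forall p : nat * nat, In p L ->
          let i := fst p in let s := snd p in
          (1 <= i <= n)%nat /\
          (exists m : nat, inJ Sv q r t n m i /\ (m + 1 <= l)%nat) /\
          (s = (i - 1)%nat \/ s = i) /\
          tchain Sv q r N (l + 1) (t s) = u) ->
       (length L <= 2)%nat).
Proof.
  assert (P1 : forall i m : nat, inJ Sv q r t n m i -> (m + 1 <= l)%nat ->
     tchain Sv q r N (l + 1) (t i) <> tchain Sv q r N (l + 1) (t (i - 1)%nat)).
  { intros i m HJ Hml E.
    pose proof HJ as [Hi _].
    pose proof (Hinc i Hi).
    pose proof (J_gap Sv q r t n m i l HS Hq0 Hq1 Hr H HJ Hml).
    pose proof (tchain_bound Sv q r N l (t i) HS Hq0 Hq1 Hr Hl).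
    pose proof (tchain_bound Sv q r N l (t (i-1)%nat) HS Hq0 Hq1 Hr Hl).
    pose proof (mesh_pos Sv q r l HS). lra. }
  split; [exact P1|].
  intros u _ L HL HP.
  assert (W : forall a b, tchain Sv q r N (l + 1) (t a) = u -> tchain Sv q r N (l + 1) (t b) = u ->
            t a - t b < mesh Sv q r l / 3).
  { intros a b Ea Eb.
    pose proof (tchain_bound Sv q r N l (t a) HS Hq0 Hq1 Hr Hl).
    pose proof (tchain_bound Sv q r N l (t b) HS Hq0 Hq1 Hr Hl). lra. }
  assert (D : forall p p', In p L -> In p' L -> p <> p' -> fst p <> fst p').
  { intros [i s] [i' s'] Hp Hp' Hne Heq. simpl in Heq. subst i'.
    destruct (HP _ Hp) as [Hi [[m [HJ Hm]] [Hs Es]]].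
    destruct (HP _ Hp') as [_ [_ [Hs' Es']]]. simpl in *.
    apply (P1 i m HJ Hm).
    destruct Hs as [->| ->]; destruct Hs' as [->| ->]; try congruence. }
  assert (T3 : forall p1 p2 p3, In p1 L -> In p2 L -> In p3 L ->
             (fst p1 < fst p2)%nat -> (fst p2 < fst p3)%nat -> False).
  { intros [i1 s1] [i2 s2] [i3 s3] H1 H2 H3 L12 L23. simpl in L12, L23.
    destruct (HP _ H1) as [Hi1 [_ [Hs1 E1]]].
    destruct (HP _ H2) as [Hi2 [[m [HJ Hm]] _]].
    destruct (HP _ H3) as [Hi3 [_ [Hs3 E3]]]. simpl in *.
    pose proof (Hinc i2 Hi2).
    pose proof (J_gap Sv q r t n m i2 l HS Hq0 Hq1 Hr H HJ Hm).
    pose proof (t_mono t n Hinc s1 (i2 - 1)%nat ltac:(lia) ltac:(lia)).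
    pose proof (t_mono t n Hinc i2 s3 ltac:(lia) ltac:(lia)).
    pose proof (W s3 s1 E3 E1).
    pose proof (mesh_pos Sv q r l HS). lra. }
  destruct L as [|a [|b [|c rest]]]; simpl; try lia.
  exfalso.
  inversion HL as [|? ? Na HL1]; subst. inversion HL1 as [|? ? Nb _]; subst.
  assert (Ia : In a (a :: b :: c :: rest)) by (simpl; auto).
  assert (Ib : In b (a :: b :: c :: rest)) by (simpl; auto).
  assert (Ic : In c (a :: b :: c :: rest)) by (simpl; auto).
  assert (ab : fst a <> fst b) by (apply D; auto; intro; subst; apply Na; simpl; auto).
  assert (ac : fst a <> fst c) by (apply D; auto; intro; subst; apply Na; simpl; auto).
  assert (bc : fst b <> fst c) by (apply D; auto; intro; subst; apply Nb; simpl; auto).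
  destruct (Nat.lt_total (fst a) (fst b)) as [h1|[h1|h1]]; try contradiction;
  destruct (Nat.lt_total (fst a) (fst c)) as [h2|[h2|h2]]; try contradiction;
  destruct (Nat.lt_total (fst b) (fst c)) as [h3|[h3|h3]]; try contradiction.
  all: first [ exact (T3 a b c Ia Ib Ic h1 h3)
             | exact (T3 a c b Ia Ic Ib h2 h3)
             | exact (T3 b a c Ib Ia Ic h1 h2)
             | exact (T3 b c a Ib Ic Ia h3 h2)
             | exact (T3 c a b Ic Ia Ib h2 h1)
             | exact (T3 c b a Ic Ib Ia h3 h1)
             | lia ].
Qed.
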